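(* Let $X$ be a nonnegative random variable with cumulative distribution function $F$, let $\gamma>0$ with $\mathbb{E}[\mathrm{e}^{\gamma X}]<\infty$, and let $g\in\mathcal{G}$. Let $\mathcal{M}:=\big[1,\int_0^\infty \mathrm{e}^{\gamma x}\,\mathrm{d}F(x)\big]$. For $m\in\mathcal{M}$ define $d(m):=\frac{1}{\gamma}\ln(g'(0)m)$, define $I_m(x):=0$ for $x\in[0,d(m)]$ and, for $x>d(m)$, let $I_m(x)\in(0,x)$ be the unique solution $y$ of $\mathrm{e}^{\gamma(x-y)}-m g'(y)=0$, and set \[ h(m):=\int_0^{d(m)}\mathrm{e}^{\gamma x}\,\mathrm{d}F(x)+\int_{d(m)}^\infty \mathrm{e}^{\gamma(x-I_m(x))}\,\mathrm{d}F(x). \] For any $M_0\in\mathcal{M}$, define $M_n:=h(M_{n-1})$ for $n\ge1$. Then the sequence $\{M_n\}_{n\ge 0}$ admits a limit $M^*=\lim_{n\to\infty}M_n\in\mathcal{M}$.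
   Context: $\mathcal{G}$ is the set of twice differentiable functions $g:\mathbb{R}_+\to\mathbb{R}_+$ with $g''\ge 0$, $g(0)=0$, $g(x)\ge x$ for all $x\ge0$, and $g$ not identically equal to $x\mapsto x$ (so $g'\ge 1$). The iteration $M_n=h(M_{n-1})$ is the paper's algorithm for computing the constant $M=\mathbb{E}[\mathrm{e}^{\gamma(X-\widehat{I}_g(X))}]$ associated with the optimal indemnity for the problem $\inf_{I}\mathbb{E}[\mathrm{e}^{\gamma(X-I(X)+\mathbb{E}[g(I(X))])}]$ over continuous $I$ with $0\le I(x)\le x$. *)

(* Defs.v *)
From HB Require Import structures.
From mathcomp Require Import all_boot all_order all_algebra.
From mathcomp Require Import all_classical all_reals all_analysis.
Set Implicit Arguments. Unset Strict Implicit. Unset Printing Implicit Defensive.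
Import Order.TTheory GRing.Theory Num.Theory.
Import numFieldNormedType.Exports.
Local Open Scope classical_set_scope.
Local Open Scope ring_scope.

(* The class G: g twice differentiable, g'' >= 0, g(0) = 0, g(x) >= x,
   g not the identity on R_+.  g is given on all of R; only its values
   and derivatives on [0, +oo) matter. *)
Definition in_G (R : realType) (g : R -> R) : Prop :=
  (forall x : R, derivable g x 1 /\ derivable (derive1 g) x 1) /\
  (forall x : R, 0 <= x -> 0 <= derive1 (derive1 g) x) /\
  g 0 = 0 /\
  (forall x : R, 0 <= x -> 0 <= g x) /\
  (forall x : R, 0 <= x -> x <= g x) /\
  (exists x : R, 0 <= x /\ g x != x).

Definition dlev (R : realType) (gamma : R) (g : R -> R) (m : R) : R :=
  gamma^-1 * ln (derive1 g 0 * m).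

(* I_m(x) = 0 on [0, d(m)]; for x > d(m), the (unique) y in (0, x) with
   exp(gamma (x - y)) - m g'(y) = 0 (chosen with xget; default x if none). *)
Definition Im (R : realType) (gamma : R) (g : R -> R) (m x : R) : R :=
  if x <= dlev gamma g m then 0
  else xget x [set y : R | 0 < y < x /\
                 expR (gamma * (x - y)) - m * derive1 g y = 0].

(* h(m) = int_0^{d(m)} e^{gamma x} dF + int_{d(m)}^oo e^{gamma (x - I_m(x))} dF
        = int_[0,oo) e^{gamma (x - I_m(x))} dF(x)   (since I_m = 0 on [0,d(m)]) *)
Definition hmap d (T : measurableType d) (R : realType) (P : probability T R)
    (X : {RV P >-> R}) (gamma : R) (g : R -> R) (m : R) : R :=
  fine (\int[distribution P X]_(x in `[0%R, +oo[)
          (expR (gamma * (x - Im gamma g m x)))%:E)%E.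

Definition Mmax d (T : measurableType d) (R : realType) (P : probability T R)
    (X : {RV P >-> R}) (gamma : R) : R :=
  fine (\int[distribution P X]_(x in `[0%R, +oo[) (expR (gamma * x))%:E)%E.

(* Main.v *)
From HB Require Import structures.
From mathcomp Require Import all_boot all_order all_algebra.
From mathcomp Require Import all_classical all_reals all_analysis.
From mathcomp Require Import measurable_realfun.
Require Import Defs.
Import Order.TTheory GRing.Theory Num.Theory.
Import numFieldNormedType.Exports.
Local Open Scope classical_set_scope.
Local Open Scope ring_scope.

Section G.
Variables (R : realType) (g : R -> R).
Hypothesis hg : in_G g.

Lemma dg_cont x : continuous_at x (derive1 g)%classic.
Proof.
case: hg => hd _.
apply/differentiable_continuous; rewrite -derivable1_diffP; exact: (hd x).2.
Qed.

Lemma dg_ge1 : 1 <= derive1 g 0.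
Proof.
case: hg => hd [_ [g0 [_ [gx _]]]].
have dg := (hd 0).1.
rewrite derive1E /derive.
set f := (fun h : R => _).
have cr : f @ 0^'+ --> lim (f @ 0^').
  move=> A /dg H; move: H; rewrite /nbhs /= /fmap /= /dnbhs /at_right /within /=. apply: filterS => x H x0; apply: H; exact: lt0r_neq0.

rewrite -(cvg_lim _ cr); last exact: norm_hausdorff. apply: limr_ge; first by apply/cvg_ex; eexists; exact: cr.
near=> x.
have x0 : 0 < x by near: x; exact: nbhs_right_gt.
rewrite /f /= g0 subr0 addr0 /GRing.scale /= mulr1 ler_pdivlMl // mulr1; apply: gx; exact: ltW.
Unshelve. all: end_near.
Qed.

Lemma dg_ndecr x y : 0 <= x -> x <= y -> derive1 g x <= derive1 g y.
Proof.
have [hd [h2 _]] := hg.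
apply: ger0_derive1_ndecry.
- by move=> z _; exact: (hd z).2.
- by move=> z; rewrite in_itv /= andbT => /ltW; exact: h2.
- apply: continuous_subspaceT => z; exact: dg_cont.
Qed.

Lemma dg_ge1' y : 0 <= y -> 1 <= derive1 g y.
Proof. by move=> y0; apply: le_trans dg_ge1 _; exact: dg_ndecr. Qed.

Variable gamma : R.
Hypothesis gamma0 : 0 < gamma.

Definition phi (m x y : R) := expR (gamma * (x - y)) - m * derive1 g y.

Lemma Im_bounds (m x : R) : 0 <= x -> 0 <= Defs.Im gamma g m x <= x.
Proof.
move=> x0; rewrite /Defs.Im; case: ifP => _; first by rewrite lexx.
case: xgetP => [y -> [/andP[y0 yx] _]|_]; last by rewrite x0 lexx.
by rewrite (ltW y0) (ltW yx).
Qed.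

Lemma phi_decr (m x y1 y2 : R) : 0 <= m -> 0 <= y1 -> y1 < y2 -> phi m x y2 < phi m x y1.
Proof.
move=> m0 y10 y12; rewrite /phi ltr_leB //.
  by rewrite ltr_expR ltr_pM2l // ltrD2l ltrN2.
by rewrite ler_wpM2l // dg_ndecr // ltW.
Qed.

Lemma phi_cont (m x : R) : continuous (phi m x).
Proof.
move=> z; apply: cvgB.
  apply: continuous_comp; last exact: continuous_expR.
  apply: cvgMr; apply: cvgB; [exact: cvg_cst | exact: cvg_id].
apply: cvgMr; exact: dg_cont.
Qed.

Lemma dlev_le (m m' : R) : 1 <= m -> m <= m' -> dlev gamma g m <= dlev gamma g m'.
Proof.
move=> m1 mm; rewrite /dlev ler_pM2l ?invr_gt0 //.
have h1 := dg_ge1.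
have g0 : 0 < derive1 g 0 by rewrite (lt_le_trans ltr01).
have m0 : 0 < m by rewrite (lt_le_trans ltr01).
have m'0 : 0 < m' by rewrite (lt_le_trans m0).
rewrite ler_ln ?posrE ?mulr_gt0 //.
by rewrite ler_wpM2l // ltW.
Qed.

Lemma Im_anti (m m' x : R) : 1 <= m -> m <= m' -> 0 <= x ->
  Defs.Im gamma g m' x <= Defs.Im gamma g m x.
Proof.
move=> m1 mm x0.
rewrite {1}/Defs.Im; case: ifP => [_|hx']; first by have /andP[] := Im_bounds m x x0.
have dmm := @dlev_le m m' m1 mm.
have m'0 : 0 <= m' by rewrite (le_trans ler01) // (le_trans m1).
rewrite /Defs.Im; case: ifP => [hx|_].
  by move: hx'; rewrite (le_trans hx dmm).
case: xgetP => [y' _ [/andP[y'0 y'x] e']|hn'].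
  case: xgetP => [y _ [/andP[y0 yx] e]|_]; last exact: ltW.
  rewrite leNgt; apply/negP => yy'.
  have h1 := @phi_decr m' x y y' m'0 (ltW y0) yy'.
  have h2 : phi m' x y <= 0.
    rewrite -e /phi lerD2l lerN2; apply: ler_wpM2r => //; apply: (le_trans ler01); exact: dg_ge1' (ltW y0).
  by have := lt_le_trans h1 h2; rewrite /phi e' ltxx.
case: xgetP => [y _ [/andP[y0 yx] e]|_]; last exact: lexx.
exfalso.
have p0 : 0 < phi m' x 0.
  rewrite /phi subr0 subr_gt0.
  move/negbT: hx'; rewrite -ltNge /dlev ltr_pdivrMl //.
  have a0 : 0 < derive1 g 0 * m'.
    by rewrite mulr_gt0 // (lt_le_trans ltr01) // ?dg_ge1 // (le_trans m1).
  rewrite -ltr_expR lnK ?posrE //; by rewrite mulrC.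
have py : phi m' x y <= 0.
  rewrite -e /phi lerD2l lerN2; apply: ler_wpM2r => //; apply: (le_trans ler01); exact: dg_ge1' (ltW y0).
have [c c0y pc] : exists2 c, c \in `[0, y] & phi m' x c = 0.
  apply: IVT; first exact: ltW.
    apply: continuous_subspaceT; exact: phi_cont.
  by rewrite ge_min le_max py (ltW p0) !orbT.
move: c0y; rewrite in_itv /= => /andP[c0 cy].
apply: (hn' c); split => //.
rewrite (le_lt_trans cy yx) andbT lt_neqAle c0 andbT.
by apply/eqP => c0'; move: pc; rewrite -c0' => pc; move: p0; rewrite pc ltxx.
Qed.
End G.
Lemma int_le_any d (T : measurableType d) (R : realType) (mu : {measure set T -> \bar R})
  (D : set T) (f1 f2 : T -> \bar R) :
  (forall x, D x -> (0 <= f1 x)%E) -> (forall x, D x -> (f1 x <= f2 x)%E) ->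
  (\int[mu]_(x in D) f1 x <= \int[mu]_(x in D) f2 x)%E.
Proof.
move=> f10 f12.
have f20 : forall x, D x -> (0 <= f2 x)%E.
  by move=> x Dx; apply: le_trans (f10 x Dx) (f12 x Dx).
rewrite !ge0_integralE //; apply: ereal_sup_le => _ [h hh <-]; exists h => //= x.
apply: le_trans (hh x) _; rewrite /patch; case: ifP => // /set_mem Dx.
exact: f12.
Qed.

Section C.
Variables (d : measure_display) (T : measurableType d) (R : realType)
  (P : probability T R) (X : {RV P >-> R}) (gamma : R).
Hypothesis X0 : forall w : T, 0 <= X w.
Hypothesis gamma0 : 0 < gamma.
Hypothesis Efin : (\int[P]_w (expR (gamma * X w))%:E < +oo)%E.

Local Notation mu := (distribution P X).

Lemma mexp : measurable_fun [set: R] (fun x : R => (expR (gamma * x))%:E).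

Proof.
apply/measurable_EFinP; apply: continuous_measurable_fun => x.
apply: continuous_comp; last exact: continuous_expR.
apply: cvgMr; exact: cvg_id.
Qed.

Lemma Mint_fin : (\int[mu]_(x in `[0%R, +oo[) (expR (gamma * x))%:E < +oo)%E.
Proof.
apply: le_lt_trans Efin.
have -> : (\int[P]_w (expR (gamma * X w))%:E =
    \int[mu]_x (expR (gamma * x))%:E)%E.
  rewrite (ge0_integral_distribution _ mexp) //.
apply: ge0_subset_integral => //; first exact: mexp.
Qed.

Lemma mu_D : mu `[0%R, +oo[ = 1%E.
Proof.
rewrite /distribution /pushforward /=.
have -> : X @^-1` `[0%R, +oo[ = setT.
  by apply/seteqP; split => // w _ /=; rewrite in_itv /= andbT X0.
exact: probability_setT.
Qed.

Lemma int_bounds (f : R -> R) :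
  (forall x, 0 <= x -> 0 <= f x <= x) ->
  (1 <= \int[mu]_(x in `[0%R, +oo[) (expR (gamma * (x - f x)))%:E <=
     \int[mu]_(x in `[0%R, +oo[) (expR (gamma * x))%:E)%E.
Proof.
move=> hf; apply/andP; split.
  have -> : (1 = \int[mu]_(x in `[0%R, +oo[) (cst 1 x))%E.
    by rewrite integral_cst // mul1e; exact/esym/mu_D.
  apply: int_le_any => x; first by rewrite lee_fin.
  rewrite /= in_itv /= andbT => x0; rewrite lee_fin -expR0 ler_expR.
  apply: mulr_ge0; first exact: ltW.
  by rewrite subr_ge0; have /andP[] := hf x x0.
apply: int_le_any => x; first by rewrite lee_fin expR_ge0.
rewrite /= in_itv /= andbT => x0; rewrite lee_fin ler_expR ler_pM2l //.
by rewrite lerBlDr lerDl; have /andP[] := hf x x0.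
Qed.

End C.

Theorem theorem2p3 (d : measure_display) (T : measurableType d) (R : realType)
  (P : probability T R) (X : {RV P >-> R}) (gamma : R) (g : R -> R)
  (M0 : R) :
  (forall w : T, 0 <= X w) ->
  0 < gamma ->
  (\int[P]_w (expR (gamma * X w))%:E < +oo)%E ->
  in_G g ->
  1 <= M0 <= Mmax X gamma ->
  exists Mstar : R,
    (fun n : nat => iter n (hmap X gamma g) M0) @ \oo --> Mstar /\
    1 <= Mstar <= Mmax X gamma.
Proof.
move=> X0 g0 Efin hg /andP[M01 M0M].
set h := hmap X gamma g.
set K := (\int[distribution P X]_(x in `[0%R, +oo[) (expR (gamma * x))%:E)%E.
set J := fun m => (\int[distribution P X]_(x in `[0%R, +oo[)
          (expR (gamma * (x - Defs.Im gamma g m x)))%:E)%E.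
have Kfin : (K < +oo)%E by exact: Mint_fin.
have JB m : (1 <= J m <= K)%E.
  apply: int_bounds => // x x0; exact: Im_bounds.
have Jfin m : J m \is a fin_num.
  have /andP[J1 JK] := JB m.
  by rewrite ge0_fin_numE ?(le_trans _ J1) // (le_lt_trans JK).
have Kfin' : K \is a fin_num.
  have /andP[J1 JK] := JB 1.
  by rewrite ge0_fin_numE ?(le_trans _ (le_trans J1 JK)) //.
have hb m : 1 <= h m <= Mmax X gamma.
  have /andP[J1 JK] := JB m.
  rewrite /h /hmap /Mmax -/(J m) -/K.
  apply/andP; split.
    by have := fine_le (isT : (1%E : \bar R) \is a fin_num) (Jfin m) J1.
  exact: fine_le.
have hmono m m' : 1 <= m -> m <= m' -> h m <= h m'.
  move=> m1 mm; rewrite /h /hmap -/(J m) -/(J m').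
  apply: fine_le => //; apply: int_le_any => x.
    by move=> _; rewrite lee_fin expR_ge0.
  rewrite /= in_itv /= andbT => x0; rewrite lee_fin ler_expR ler_pM2l //.
  by rewrite lerD2l lerN2; exact: Im_anti.
set u := fun n : nat => iter n h M0.
have ub n : 1 <= u n <= Mmax X gamma.
  by case: n => [|n]; [rewrite /u /= M01 M0M | rewrite /u iterS hb].
have cu : cvgn u.
  have [le0|lt0] := leP M0 (h M0).
    apply: nondecreasing_is_cvgn.
      apply/nondecreasing_seqP; elim => [|n IH]; first by rewrite /u /=.
      rewrite /u !iterS; apply: hmono => //.
      by have /andP[] := ub n.
    by exists (Mmax X gamma) => _ [n _ <-]; have /andP[] := ub n.
  apply: nonincreasing_is_cvgn.
    apply/nonincreasing_seqP; elim => [|n IH]; first by rewrite /u /= ltW.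
    rewrite /u !iterS; apply: hmono => //.
    by have /andP[] := ub n.+1.
  by exists 1 => _ [n _ <-]; have /andP[] := ub n.
exists (limn u); split; first exact: cu.
apply/andP; split.
  apply: limr_ge => //; apply: nearW => n; by have /andP[] := ub n.
apply: limr_le => //; apply: nearW => n; by have /andP[] := ub n.
Qed.
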